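(* Let $m \geq 2$ be an integer and let $p \in \left(\frac{1}{m}, 1\right)$. Then $$\mathbb{P}_{X \sim B(m,p)}\big[X \geq mp\big] \;\geq\; 1 - \max_{k \in \{1, \ldots, m-1\}} \mathbb{P}_{X \sim B(m,\frac{k}{m})}\big[X \leq k\big].$$
   Context: $B(m,p)$ denotes the binomial distribution with $m$ trials and success probability $p$: $\mathbb{P}[X=j]=\binom{m}{j}p^j(1-p)^{m-j}$ for $j=0,\dots,m$; its mean is $mp$. *)

(* Defs.v *)
From HB Require Import structures.
From mathcomp Require Import all_boot all_order all_algebra.
Set Implicit Arguments. Unset Strict Implicit. Unset Printing Implicit Defensive.
Import Order.TTheory GRing.Theory Num.Theory.
Local Open Scope ring_scope.

Definition binom_pmf {R : realFieldType} (m : nat) (p : R) (j : nat) : R :=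
  ('C(m, j))%:R * p ^+ j * (1 - p) ^+ (m - j).

Definition binom_ge {R : realFieldType} (m : nat) (p t : R) : R :=
  \sum_(0 <= j < m.+1 | t <= j%:R) binom_pmf m p j.

Definition binom_le {R : realFieldType} (m : nat) (p : R) (k : nat) : R :=
  \sum_(0 <= j < m.+1 | (j <= k)%N) binom_pmf m p j.

(* Main.v *)
Require Import Defs.
From HB Require Import structures.
From mathcomp Require Import all_boot all_order all_algebra.
From mathcomp Require Import ring lra zify.
Import Order.TTheory GRing.Theory Num.Theory.
Local Open Scope ring_scope.

Section S.
Variable R : realFieldType.
Implicit Types p q : R.

Lemma pmf_gt m p j : (m < j)%N -> binom_pmf m p j = 0.
Proof. by move=> h; rewrite /binom_pmf bin_small // !mul0r. Qed.

Lemma pmf_rec m p j : binom_pmf m.+1 p j.+1 = p * binom_pmf m p j + (1-p) * binom_pmf m p j.+1.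
Proof.
rewrite /binom_pmf binS natrD subSS.
case: (ltnP j m) => h.
  have -> : (m - j = (m - j.+1).+1)%N by lia.
  rewrite !exprS; ring.
have -> : 'C(m, j.+1) = 0%N by apply: bin_small; lia.
rewrite mul0r mul0r mulr0 addr0 exprS; ring.
Qed.

Lemma pmf0 m p : binom_pmf m.+1 p 0 = (1-p) * binom_pmf m p 0.
Proof. rewrite /binom_pmf !bin0 !subn0 !exprS; ring. Qed.

Lemma pmf_ge0 m p j : 0 <= p -> p <= 1 -> 0 <= binom_pmf m p j.
Proof.
move=> h0 h1; rewrite /binom_pmf; apply: mulr_ge0; first apply: mulr_ge0.
- exact: ler0n.
- exact: exprn_ge0.
- by apply: exprn_ge0; rewrite subr_ge0.
Qed.

Definition L m p k := \sum_(j < k.+1) binom_pmf m p j.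

Lemma L_le m p k : binom_le m p k = L m p k.
Proof.
rewrite /binom_le /L.
transitivity (\sum_(0 <= j < (m+k).+1 | (j <= k)%N) binom_pmf m p j).
  rewrite [RHS](big_cat_nat (n:=m.+1) (p:=(m+k).+1)) //=; last by lia.
  rewrite [X in _ = _ + X]big1_seq ?addr0 //.
  move=> j /andP[_]; rewrite mem_index_iota => /andP[h _]; apply: pmf_gt; lia.
rewrite (big_cat_nat (n:=k.+1) (p:=(m+k).+1)) //=; last by lia.
rewrite [X in _ + X]big1_seq ?addr0; last first.
  move=> j /andP[hj]; rewrite mem_index_iota => /andP[h _]; lia.
rewrite big_mkord; apply: eq_bigl => i /=; by rewrite -ltnS ltn_ord.
Qed.

Lemma L0 p k : L 0 p k = 1.
Proof.
rewrite /L big_ord_recl big1 ?addr0.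
  by rewrite /binom_pmf bin0 !expr0 !mulr1.
by move=> i _; apply: pmf_gt.
Qed.

Lemma L_S0 m p : L m.+1 p 0 = (1-p) * L m p 0.
Proof. by rewrite /L !big_ord1 pmf0. Qed.

Lemma L_SS m p k : L m.+1 p k.+1 = p * L m p k + (1-p) * L m p k.+1.
Proof.
rewrite /L !(big_ord_recl k.+1).
rewrite (eq_bigr (fun i : 'I_k.+1 => p * binom_pmf m p i + (1-p) * binom_pmf m p (lift ord0 i))); last first.
  by move=> i _; rewrite (@lift0 _ i) pmf_rec.
rewrite big_split /= -!mulr_sumr.
change (nat_of_ord (@ord0 k.+1)) with 0%N.
rewrite pmf0.
ring.
Qed.

Lemma L_ge0 m p k : 0 <= p -> p <= 1 -> 0 <= L m p k.
Proof. by move=> h0 h1; apply: sumr_ge0 => i _; apply: pmf_ge0. Qed.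

Lemma L_monok m p k : 0 <= p -> p <= 1 -> L m p k <= L m p k.+1.
Proof.
move=> h0 h1; rewrite /L (big_ord_recr k.+1) /= lerDl; exact: pmf_ge0.
Qed.

Lemma L_one m p k : (m <= k)%N -> L m p k = 1.
Proof.
elim: m k => [|m IH] k hk; first exact: L0.
case: k hk => [|k] hk //; rewrite L_SS !IH //; [ring|lia].
Qed.

Lemma L_anti m q p k : 0 <= q -> q <= p -> p <= 1 -> L m p k <= L m q k.
Proof.
move=> h0 h1 h2; elim: m k => [|m IH] k; first by rewrite !L0.
case: k => [|k].
  rewrite !L_S0; apply: ler_pM; rewrite ?subr_ge0 ?L_ge0 ?IH //; try lra.
rewrite !L_SS.
have a1 := IH k; have a2 := IH k.+1.
have a3 : L m q k <= L m q k.+1 by apply: L_monok; lra.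
have h4 : p * L m p k <= p * L m q k by apply: ler_wpM2l => //; lra.
have h5 : (1-p) * L m p k.+1 <= (1-p) * L m q k.+1 by apply: ler_wpM2l => //; lra.
have h6 : (p-q) * L m q k <= (p-q) * L m q k.+1 by apply: ler_wpM2l => //; lra.
nra.
Qed.

Lemma le_bigmax_seq (F : nat -> R) (s : seq nat) x : x \in s -> F x <= \big[Num.max/0]_(i <- s) F i.
Proof.
elim: s => [|a s IH] //; rewrite in_cons big_cons le_max => /orP[/eqP->|h].
  by rewrite lexx.
by rewrite IH ?orbT.
Qed.
End S.

Theorem corollary1 (R : realFieldType) (m : nat) (p : R)
  (hm : (2 <= m)%N) (hp1 : 1 / m%:R < p) (hp2 : p < 1) :
  binom_ge m p (m%:R * p) >=
  1 - \big[Num.max/0]_(1 <= k < m) binom_le m (k%:R / m%:R) k.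
Proof.
have m0 : (0 : R) < m%:R by rewrite ltr0n; lia.
have hmp : 1 < m%:R * p by rewrite mulrC -ltr_pdivrMr.
have hmp2 : m%:R * p < m%:R by rewrite -{2}(mulr1 m%:R) ltr_pM2l.
have p0 : 0 < p by apply: lt_trans hp1; rewrite mul1r invr_gt0.
pose P := fun j : nat => (j <= m)%N && (j%:R < m%:R * p).
have exP : exists j, P j by exists 1%N; rewrite /P hmp andbT; lia.
have ub : forall j, P j -> (j <= m)%N by move=> j /andP[].
case: (ex_maxnP exP ub) => k /andP[km kp] maxk.
have hk1 : (1 <= k)%N by apply: maxk; rewrite /P hmp andbT; lia.
have hkm : (k < m)%N by rewrite -(ltr_nat R); apply: lt_trans kp hmp2.
have key : forall j, (j <= m)%N -> (m%:R * p <= (j%:R : R)) = ~~ (j <= k)%N.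
  move=> j hj; rewrite leNgt; congr negb; apply/idP/idP => h.
    by apply: maxk; rewrite /P hj h.
  by apply: le_lt_trans kp; rewrite ler_nat.
have hsum : binom_ge m p (m%:R * p) + binom_le m p k = 1.
  have h1 := @L_one R m p m (leqnn m); rewrite -L_le in h1.
  rewrite -[RHS]h1 /binom_ge /binom_le.
  rewrite [RHS](bigID (fun j : nat => (j <= k)%N)) /= addrC.
  congr (_ + _); rewrite big_nat_cond [RHS]big_nat_cond; apply: eq_bigl => j /=;
    rewrite ltnS; case: (leqP j m) => hj //=.
  by rewrite key.
have hkp : k%:R / m%:R < p by rewrite ltr_pdivrMr // mulrC.
have hk0 : 0 <= (k%:R / m%:R : R) by rewrite divr_ge0 ?ler0n.
have hmono : binom_le m p k <= binom_le m (k%:R / m%:R) k.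
  rewrite !L_le; apply: L_anti => //; [exact: ltW| exact: ltW].
have := @le_bigmax_seq R (fun i => binom_le m (i%:R / m%:R) i) (index_iota 1 m) k.
rewrite mem_index_iota hk1 hkm => /(_ isT) H.
lra.
Qed.
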